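(* Let $C\subseteq(\mathbb{N}\cup\{\infty\})^d$ be semi-linear and $D\subseteq\{1,\dots,d\}$. Let $C_D\subseteq\mathbb{N}^d$ be the set obtained from $C$ by (1) removing every vector $(v_1,\dots,v_d)$ with $v_i=\infty$ for some $i\notin D$, and then (2) as long as the set contains a vector $(v_1,\dots,v_d)$ with $v_i=\infty$ for some $i$, replacing it by all vectors $(v_1,\dots,v_{i-1},z,v_{i+1},\dots,v_d)$ with $z\in\mathbb{N}$. (Equivalently, $C_D$ is the set of $\mathbf{u}\in\mathbb{N}^d$ for which there is $\mathbf{v}\in C$ with $v_i=\infty$ only for $i\in D$ and $u_i=v_i$ whenever $v_i\neq\infty$.) Then $C_D$ is semi-linear.
   Context: A linear set over $(\mathbb{N}\cup\{\infty\})^d$ is a set $\{b_0+b_1z_1+\dots+b_\ell z_\ell\mid z_1,\dots,z_\ell\in\mathbb{N}\}$ with $b_0,\dots,b_\ell\in(\mathbb{N}\cup\{\infty\})^d$, with componentwise arithmetic where $z+\infty=\infty+z=\infty+\infty=\infty$, $z\cdot\infty=\infty\cdot z=\infty$ for $z>0$, and $0\cdot\infty=\infty\cdot0=0$. A semi-linear set is a finite union of linear sets; for subsets of $\mathbb{N}^d$ this means all $b_j\in\mathbb{N}^d$. *)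

(* Defs.v *)
From mathcomp Require Import all_boot.
Set Implicit Arguments. Unset Strict Implicit. Unset Printing Implicit Defensive.

(* N ∪ {∞}: [Some n] is the natural number n, [None] is ∞. *)
Definition enat := option nat.

Definition eadd (x y : enat) : enat :=
  match x, y with Some a, Some b => Some (a + b) | _, _ => None end.

Definition emul (z : nat) (x : enat) : enat :=
  match x with
  | Some a => Some (z * a)
  | None => if z == 0 then Some 0 else None
  end.

Definition evec (d : nat) := 'I_d -> enat.
Definition nvec (d : nat) := 'I_d -> nat.

Definition ecomb d (b0 : evec d) l (b : 'I_l -> evec d) (z : 'I_l -> nat) : evec d :=
  fun i => eadd (b0 i) (foldr eadd (Some 0) [seq emul (z j) (b j i) | j <- enum 'I_l]).

Definition elinear_set d (b0 : evec d) l (b : 'I_l -> evec d) : evec d -> Prop :=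
  fun v => exists z : 'I_l -> nat, v = ecomb b0 b z.

Definition esemilinear d (S : evec d -> Prop) : Prop :=
  exists (m : nat) (B0 : 'I_m -> evec d) (L : 'I_m -> nat)
         (B : forall k : 'I_m, 'I_(L k) -> evec d),
    forall v, S v <-> exists k : 'I_m, elinear_set (B0 k) (B k) v.

Definition ncomb d (b0 : nvec d) l (b : 'I_l -> nvec d) (z : 'I_l -> nat) : nvec d :=
  fun i => b0 i + \sum_(j < l) z j * b j i.

Definition nlinear_set d (b0 : nvec d) l (b : 'I_l -> nvec d) : nvec d -> Prop :=
  fun u => exists z : 'I_l -> nat, u = ncomb b0 b z.

Definition nsemilinear d (S : nvec d -> Prop) : Prop :=
  exists (m : nat) (B0 : 'I_m -> nvec d) (L : 'I_m -> nat)
         (B : forall k : 'I_m, 'I_(L k) -> nvec d),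
    forall u, S u <-> exists k : 'I_m, nlinear_set (B0 k) (B k) u.

Definition CD d (C : evec d -> Prop) (D : {set 'I_d}) : nvec d -> Prop :=
  fun u => exists v, C v /\ (forall i, v i = None -> i \in D) /\
                     (forall i n, v i = Some n -> u i = n).

(* Main.v *)
Require Import Defs.
From mathcomp Require Import all_boot.
From Stdlib Require Import FunctionalExtensionality.
From Stdlib Require List Classical_Prop.
Set Implicit Arguments. Unset Strict Implicit. Unset Printing Implicit Defensive.

Definition lrec d := {l : nat & (nvec d * ('I_l -> nvec d))%type}.
Definition lin d (x : lrec d) : nvec d -> Prop :=
  nlinear_set (projT2 x).1 (projT2 x).2.
Definition SL d (S : nvec d -> Prop) : Prop :=
  exists s : seq (lrec d), forall u, S u <-> exists x, List.In x s /\ lin x u.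

Lemma In_nth T (x0 x : T) s : List.In x s <-> exists k, k < size s /\ x = nth x0 s k.
Proof.
elim: s => [|y s IH] /=; first by split=> // [[k []]].
split.
- case=> [->|H]; first by exists 0.
  by case/IH: H => k [Hk ->]; exists k.+1.
- case=> [[|k] [Hk Hx]]; first by left.
  by right; apply/IH; exists k.
Qed.

Lemma SL_nsemi d (S : nvec d -> Prop) : SL S -> nsemilinear S.
Proof.
case=> s Hs.
pose x0 : lrec d := existT _ 0 ((fun _ => 0), (fun j : 'I_0 => fun _ => 0)).
exists (size s), (fun k => (projT2 (nth x0 s k)).1), (fun k => projT1 (nth x0 s k)),
  (fun k => (projT2 (nth x0 s k)).2).
move=> u; rewrite Hs; split.
- case=> x [/(In_nth x0) [k [Hk ->]] Hl].
  by exists (Ordinal Hk).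
- case=> k Hk; exists (nth x0 s k); split => //.
  by apply/(In_nth x0); exists k.
Qed.

Lemma SL_ext d (S T : nvec d -> Prop) : SL S -> (forall u, S u <-> T u) -> SL T.
Proof. by case=> s Hs H; exists s => u; rewrite -H. Qed.

Lemma SL_seq d (I : Type) (r : seq I) (P : I -> nvec d -> Prop) :
  (forall i, SL (P i)) -> SL (fun u => exists i, List.In i r /\ P i u).
Proof.
move=> HP; elim: r => [|i r [s Hs]].
  by exists [::] => u; split; case=> ? [].
case: (HP i) => s1 Hs1.
exists (s1 ++ s) => u; split.
- case=> j [[<-|Hj] Hu].
  + by case/Hs1: Hu => x [Hx Hl]; exists x; rewrite List.in_app_iff; auto.
  + have: exists i, List.In i r /\ P i u by exists j.
    by case/Hs => x [Hx Hl]; exists x; rewrite List.in_app_iff; auto.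
- case=> x [/List.in_app_iff [Hx|Hx] Hl].
  + by exists i; split; [left|apply/Hs1; exists x].
  + have : exists i, List.In i r /\ P i u by apply/Hs; exists x.
    by case=> j [Hj Hu]; exists j; split; [right|].
Qed.

Lemma SL_fin d (I : finType) (P : I -> nvec d -> Prop) :
  (forall i, SL (P i)) -> SL (fun u => exists i, P i u).
Proof.
move=> HP; apply: SL_ext (SL_seq (enum I) HP) _ => u; split.
- by case=> i [_ H]; exists i.
- case=> i Hi; exists i; split => //.
  have : i \in enum I by rewrite mem_enum.
  elim: (enum I) => //= j r IH; rewrite in_cons => /orP [/eqP ->|]; auto.
Qed.

Definition lin' d (T : finType) (b0 : nvec d) (g : T -> nvec d) (u : nvec d) :=
  exists z : T -> nat, u = fun i => b0 i + \sum_(t : T) z t * g t i.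

Lemma SL_lin' d (T : finType) (Q : Prop) (b0 : nvec d) (g : T -> nvec d) :
  SL (fun u => Q /\ lin' b0 g u).
Proof.
case: (Classical_Prop.classic Q) => HQ.
- pose x : lrec d := existT _ #|T| (b0, fun j => g (enum_val j)).
  exists [:: x] => u; split.
  + case=> _ [z ->]; exists x; split; first by left.
    exists (fun j => z (enum_val j)); rewrite /ncomb /=.
    by apply: functional_extensionality => i; rewrite (big_enum_val (A := predT)).
  + case=> y [[<-|[]] [z ->]]; split => //.
    exists (fun t => z (enum_rank t)); rewrite /ncomb /=.
    apply: functional_extensionality => i; congr (_ + _).
    rewrite [RHS](big_enum_val (A := predT)) /=.
    by apply: eq_bigr => j _; rewrite enum_valK.
- by exists [::] => u; split; [case|case=> ? []].
Qed.

Definition fin (x : enat) : nat := odflt 0 x.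
Definition isinf (x : enat) : bool := x == None.

Lemma foldr_val d l (b : 'I_l -> evec d) (z : 'I_l -> nat) (i : 'I_d) (r : seq 'I_l) :
  foldr eadd (Some 0) [seq emul (z j) (b j i) | j <- r] =
  if has (fun j => (0 < z j) && isinf (b j i)) r then None
  else Some (\sum_(j <- r) z j * fin (b j i)).
Proof.
elim: r => [|j r IH] /=; first by rewrite big_nil.
rewrite IH big_cons /fin /isinf; case: (b j i) => [a|] /=.
- by rewrite andbF /=; destruct (has _ r).
- case: (z j) => [|n] //=.
  by destruct (has _ r).
Qed.

Definition Iset d l (b0 : evec d) (b : 'I_l -> evec d) (P : pred 'I_l) (i : 'I_d) : bool :=
  isinf (b0 i) || has (fun j => P j && isinf (b j i)) (enum 'I_l).

Lemma ecomb_val d l (b0 : evec d) (b : 'I_l -> evec d) z i :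
  ecomb b0 b z i = if Iset b0 b (fun j => 0 < z j) i then None
                   else Some (fin (b0 i) + \sum_(j < l) z j * fin (b j i)).
Proof.
rewrite /ecomb foldr_val /Iset /isinf /fin; case: (b0 i) => [a|] /=.
- by case: ifP => // _; rewrite big_enum.
- by [].
Qed.

Definition base d l (b0 : evec d) (b : 'I_l -> evec d) (S : {set 'I_l}) : nvec d :=
  fun i => if Iset b0 b (fun j => j \in S) i then 0
           else fin (b0 i) + \sum_(j in S) fin (b j i).

Definition gen d l (b0 : evec d) (b : 'I_l -> evec d) (S : {set 'I_l})
  (t : ('I_l + 'I_d)%type) : nvec d :=
  fun i => match t with
  | inl j => if (j \in S) && ~~ Iset b0 b (fun j => j \in S) i then fin (b j i) else 0
  | inr k => if Iset b0 b (fun j => j \in S) k && (i == k) then 1 else 0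
  end.

Lemma keyfin d l (b0 : evec d) (b : 'I_l -> evec d) (S : {set 'I_l}) z (z' : ('I_l + 'I_d)%type -> nat) i :
  (forall j, z j = if j \in S then (z' (inl j)).+1 else 0) ->
  ~~ Iset b0 b (fun j => j \in S) i ->
  fin (b0 i) + \sum_(j < l) z j * fin (b j i) =
  base b0 b S i + \sum_(t : ('I_l + 'I_d)%type) z' t * gen b0 b S t i.
Proof.
move=> Hz Hi; rewrite /base (negbTE Hi) big_sumType /=.
have -> : \sum_(k < d) z' (inr k) *
   (if Iset b0 b (fun j => j \in S) k && (i == k) then 1 else 0) = 0.
  apply: big1 => k _; case: ifP; last by rewrite muln0.
  by case/andP => Hk /eqP Eik; move: Hi; rewrite Eik Hk.
rewrite addn0 -addnA; congr (_ + _).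
rewrite [X in _ = X + _]big_mkcond -big_split /=; apply: eq_bigr => j _.
rewrite Hz Hi andbT; case: (j \in S) => //.
by rewrite muln0.
Qed.

Lemma keyinf d l (b0 : evec d) (b : 'I_l -> evec d) (S : {set 'I_l}) (z' : ('I_l + 'I_d)%type -> nat) i :
  Iset b0 b (fun j => j \in S) i ->
  base b0 b S i + \sum_(t : ('I_l + 'I_d)%type) z' t * gen b0 b S t i = z' (inr i).
Proof.
move=> Hi; rewrite /base Hi big_sumType /=.
rewrite big1 ?add0n; last by move=> j _; rewrite Hi andbF muln0.
rewrite (bigD1 i) //= Hi eqxx muln1 big1 ?addn0 // => k /negbTE nk.
by rewrite eq_sym nk andbF muln0.
Qed.

Lemma core d l (b0 : evec d) (b : 'I_l -> evec d) (D : {set 'I_d}) :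
  SL (CD (elinear_set b0 b) D).
Proof.
pose P := fun (S : {set 'I_l}) u =>
  [forall i, Iset b0 b (fun j => j \in S) i ==> (i \in D)] /\ lin' (base b0 b S) (gen b0 b S) u.
apply: SL_ext (@SL_fin d _ P (fun S => SL_lin' _ _ _)) _ => u; split.
- case=> S [/forallP HD [z' ->]].
  pose z j := if j \in S then (z' (inl j)).+1 else 0.
  have HI : forall i, Iset b0 b (fun j => 0 < z j) i = Iset b0 b (fun j => j \in S) i.
    move=> i; rewrite /Iset; congr (_ || _); apply: eq_has => j /=.
    by rewrite /z; case: (j \in S).
  exists (ecomb b0 b z); split; first by exists z.
  split.
  + move=> i; rewrite ecomb_val HI; case: ifP => // Hi _; exact: (implyP (HD i)) Hi.
  + move=> i n; rewrite ecomb_val HI; case: ifP => // Hi [<-] /=.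
    by rewrite (@keyfin _ _ _ _ S z z') ?Hi.
- case=> v [[z ->] [Hinf Hfin]].
  pose S := [set j | 0 < z j].
  have HI : forall i, Iset b0 b (fun j => 0 < z j) i = Iset b0 b (fun j => j \in S) i.
    move=> i; rewrite /Iset; congr (_ || _); apply: eq_has => j /=.
    by rewrite /S inE.
  exists S; split.
    apply/forallP => i; apply/implyP => Hi; apply: Hinf.
    by rewrite ecomb_val HI Hi.
  exists (fun t => match t with inl j => (z j).-1 | inr k => u k end).
  apply: functional_extensionality => i /=.
  case Hi: (Iset b0 b (fun j => j \in S) i).
  + by rewrite keyinf.
  + rewrite -(@keyfin _ _ _ _ S z); last by rewrite Hi.
      apply: Hfin; by rewrite ecomb_val HI Hi.
    by move=> j /=; rewrite /S inE; case: (z j).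
Qed.

Theorem lemma6 (d : nat) (C : evec d -> Prop) (D : {set 'I_d}) :
  esemilinear C -> nsemilinear (CD C D).
Proof.
case=> m [B0 [L [B HC]]]; apply: SL_nsemi.
apply: SL_ext (@SL_fin d _ (fun k => CD (elinear_set (B0 k) (B k)) D)
                 (fun k => core (B0 k) (B k) D)) _ => u; split.
- case=> k [v [Hv [H1 H2]]]; exists v; split => //; apply/HC; by exists k.
- case=> v [/HC [k Hk] [H1 H2]]; exists k, v; done.
Qed.
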